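(* Assume $E_{l,m}$ is toric, i.e. $q-p$ divides $m$, and write $m=a(q-p)$. Then the set $\mathcal H^B$ of $B$-fixed points of $\mathcal H$ consists of the single point $[J_0]$, where $J_0=(X_0^{q-p},\; X_2,\; X_4,\; X_1^{aq}X_3^{ap}) \subset \mathbb C[X_0,X_1,X_2,X_3,X_4]$.
   Context: Let $l=p/q \in \mathbb Q \cap (0,1]$ with $\gcd(p,q)=1$ and $m \in \mathbb N$. Let $H_{q-p}=\{X_0^{q-p}=X_1X_4-X_2X_3\} \subset \mathbb C^5$, where $\mathbb C^5=V(0)\oplus V(1)\oplus V(1)$ with coordinates $X_0,\dots,X_4$ and $SL(2)$ acts by left multiplication on the matrix $\begin{pmatrix} X_1 & X_3\\ X_2 & X_4\end{pmatrix}$. Let $G_0=\{\mathrm{diag}(t,t^{-p},t^{-p},t^q,t^q): t\in\mathbb C^*\}$ and $G_m=\{\mathrm{diag}(1,\zeta^{-1},\zeta^{-1},\zeta,\zeta): \zeta^m=1\}$; these commute with the $SL(2)$-action. Let $E_{l,m}=H_{q-p}/\!\!/(G_0\times G_m)$ (Popov's 3-dimensional affine normal quasihomogeneous $SL(2)$-variety). Identify $\mathrm{Irr}(G_0\times G_m)$ with $\mathbb Z\times\mathbb Z/m\mathbb Z$ and let $h(n,d)=1$ for all $(n,d)$ (the Hilbert function of the general fibers of the quotient morphism). Let $\mathcal H=\mathrm{Hilb}^{G_0\times G_m}_h(H_{q-p})$ be the invariant Hilbert scheme, with the $SL(2)$-action induced from $H_{q-p}$, and let $B\subset SL(2)$ be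 the Borel subgroup of upper triangular matrices. *)

(* Defs.v *)
From HB Require Import structures.
From mathcomp Require Import all_boot all_order all_algebra.
From mathcomp Require Import reals.
From mathcomp Require Import complex.
From mathcomp Require Import mpoly.
Set Implicit Arguments. Unset Strict Implicit. Unset Printing Implicit Defensive.
Import Order.TTheory GRing.Theory Num.Theory.
Local Open Scope ring_scope.

Section Defs.
Variable C : comRingType.

Definition Xc (k : nat) : {mpoly C[5]} := 'X_(inord k).

Definition is_ideal (J : {mpoly C[5]} -> Prop) : Prop :=
  [/\ J 0, (forall f g, J f -> J g -> J (f + g)) & (forall f g, J g -> J (f * g))].

Definition Heq (p q : nat) : {mpoly C[5]} :=
  Xc 0 ^+ (q - p) - (Xc 1 * Xc 4 - Xc 2 * Xc 3).

Definition inJ0 (p q a : nat) (f : {mpoly C[5]}) : Prop :=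
  exists c0 c1 c2 c3 : {mpoly C[5]},
    f = c0 * Xc 0 ^+ (q - p) + c1 * Xc 2 + c2 * Xc 4
        + c3 * (Xc 1 ^+ (a * q) * Xc 3 ^+ (a * p)).
End Defs.

Section DefsF.
Variable C : fieldType.

(* action of (t, zeta) in G_0 x G_m, i.e. of
   diag(t, t^-p zeta^-1, t^-p zeta^-1, t^q zeta, t^q zeta), on polynomial
   functions: f |-> f o g *)
Definition Gact (p q : nat) (t z : C) (f : {mpoly C[5]}) : {mpoly C[5]} :=
  f \mPo [tuple t *: Xc C 0;
                (t ^- p * z^-1) *: Xc C 1;
                (t ^- p * z^-1) *: Xc C 2;
                (t ^+ q * z) *: Xc C 3;
                (t ^+ q * z) *: Xc C 4].

(* action of b = [[b11, b12], [0, b22]] in B (left multiplication on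
   [[X1, X3], [X2, X4]]) on polynomial functions: f |-> f o b *)
Definition Bact (b11 b12 b22 : C) (f : {mpoly C[5]}) : {mpoly C[5]} :=
  f \mPo [tuple Xc C 0;
                b11 *: Xc C 1 + b12 *: Xc C 2;
                b22 *: Xc C 2;
                b11 *: Xc C 3 + b12 *: Xc C 4;
                b22 *: Xc C 4].

Definition G_stable (p q m : nat) (J : {mpoly C[5]} -> Prop) : Prop :=
  forall t z : C, t != 0 -> z ^+ m = 1 ->
    forall f, J f -> J (Gact p q t z f).

Definition B_stable (J : {mpoly C[5]} -> Prop) : Prop :=
  forall b11 b12 b22 : C, b11 * b22 = 1 ->
    forall f, J f -> J (Bact b11 b12 b22 f).

(* the class of f in C[X]/J lies in the isotypic component of the character
   (n, d) : (t, zeta) |-> t^n zeta^d of G_0 x G_m *)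
Definition in_isotypic (p q m : nat) (n d : int) (J : {mpoly C[5]} -> Prop)
    (f : {mpoly C[5]}) : Prop :=
  forall t z : C, t != 0 -> z ^+ m = 1 ->
    J (Gact p q t z f - (t ^ n * z ^ d) *: f).

Definition isotypic_dim1 (p q m : nat) (n d : int) (J : {mpoly C[5]} -> Prop)
  : Prop :=
  exists f, [/\ in_isotypic p q m n d J f, ~ J f &
    forall g, in_isotypic p q m n d J g -> exists c : C, J (g - c *: f)].

(* closed points of the invariant Hilbert scheme Hilb^{G_0 x G_m}_h(H_{q-p})
   with h = 1: G-stable ideals of C[H_{q-p}] = C[X]/(Heq), i.e. ideals of C[X]
   containing Heq, whose quotient has all isotypic components of dim 1 *)
Definition in_Hilb (p q m : nat) (J : {mpoly C[5]} -> Prop) : Prop :=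
  [/\ is_ideal J, J (Heq C p q), G_stable p q m J &
      forall n d : int, isotypic_dim1 p q m n d J].
End DefsF.

(* Main.v *)
Require Import Defs.
From Stdlib Require Import FunctionalExtensionality PropExtensionality.
From HB Require Import structures.
From mathcomp Require Import all_boot all_order all_algebra.
From mathcomp Require Import reals.
From mathcomp Require Import complex.
From mathcomp Require Import mpoly.
From mathcomp Require Import cyclic separable cyclotomic.
From mathcomp Require Import zify ring lra.
Import Order.TTheory GRing.Theory Num.Theory.
Local Open Scope ring_scope.
Set Implicit Arguments. Unset Strict Implicit. Unset Printing Implicit Defensive.

Section Prim.
Variable C0 : numClosedFieldType.
Lemma prim_root_exists n : (n > 0)%N -> exists z : C0, n.-primitive_root z.
Proof.
pose p : {poly C0} := 'X^n - 1; have [r Dp] := closed_field_poly_normal p.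
move=> n_gt0; rewrite (monicP _) ?monicXnsubC // scale1r in Dp.
have rn1: all n.-unity_root r by apply/allP=> z; rewrite -root_prod_XsubC -Dp.
have sz_r: (n < (size r).+1)%N.
  by rewrite -(size_prod_XsubC r id) -Dp size_XnsubC.
have [|z] := hasP (has_prim_root n_gt0 rn1 _ sz_r); last by exists z.
by rewrite -separable_prod_XsubC -Dp separable_Xn_sub_1 // pnatr_eq0 -lt0n.
Qed.
End Prim.

Lemma arith_inj (p r a i1 j1 k1 i2 j2 k2 : nat) (e : int) :
  (0 < r)%N -> (0 < a)%N -> (i1 < r)%N -> (i2 < r)%N ->
  ~ ((a * (p + r) <= j1)%N /\ (a * p <= k1)%N) ->
  ~ ((a * (p + r) <= j2)%N /\ (a * p <= k2)%N) ->
  (i1%:Z - (p * j1)%N%:Z + ((p + r) * k1)%N%:Z = i2%:Z - (p * j2)%N%:Z + ((p + r) * k2)%N%:Z) ->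
  (k1%:Z - j1%:Z - (k2%:Z - j2%:Z) = (a * r)%N%:Z * e) ->
  [/\ i1 = i2, j1 = j2 & k1 = k2].
Proof.
move=> hr ha h1 h2 n1 n2 hw he.
have E1 : r%:Z * (j1%:Z - j2%:Z + a%:Z * (p + r)%:Z * e) = i2%:Z - i1%:Z.
  have -> : r%:Z * (j1%:Z - j2%:Z + a%:Z * (p + r)%:Z * e) =
     r%:Z * (j1%:Z - j2%:Z) + (p + r)%:Z * ((a * r)%N%:Z * e).
    rewrite PoszM PoszD; ring.
  rewrite -he; lia.
have X0 : j1%:Z - j2%:Z + a%:Z * (p + r)%:Z * e = 0.
  set X := j1%:Z - j2%:Z + _ in E1 *.
  have : (X <= 0)%R by nia.
  have : (0 <= X)%R by nia.
  lia.
rewrite X0 mulr0 in E1.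
have ei : i1 = i2 by lia.
have hK : k1%:Z - k2%:Z = - (a%:Z * p%:Z * e).
  have : k1%:Z - k2%:Z = (k1%:Z - j1%:Z - (k2%:Z - j2%:Z)) + (j1%:Z - j2%:Z) by ring.
  rewrite he => ->.
  have -> : j1%:Z - j2%:Z = - (a%:Z * (p + r)%:Z * e) by lia.
  rewrite PoszM PoszD; ring.
have hJ : j1%:Z - j2%:Z = - (a%:Z * (p + r)%:Z * e) by lia.
case: (ltrgt0P e) => he0.
- exfalso; apply: n2; split; nia.
- exfalso; apply: n1; split; nia.
- move: hK hJ; rewrite he0 !mulr0 oppr0 => hK hJ; split; lia.
Qed.

Lemma shift_exists (x y : int) (A B : nat) : (0 < A)%N -> (0 < B)%N ->
  exists s : int, [/\ 0 <= x + s * A%:Z, 0 <= y + s * B%:Z &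
     (x + (s - 1) * A%:Z < 0 \/ y + (s - 1) * B%:Z < 0)].
Proof.
move=> hA hB.
suff H : forall N : nat, forall s : int, 0 <= x + s * A%:Z -> 0 <= y + s * B%:Z ->
   x + s * A%:Z + (y + s * B%:Z) <= N%:Z ->
   exists s : int, [/\ 0 <= x + s * A%:Z, 0 <= y + s * B%:Z &
     (x + (s - 1) * A%:Z < 0 \/ y + (s - 1) * B%:Z < 0)].
  pose s0 := `|x|%:Z + `|y|%:Z.
  have h1 : 0 <= x + s0 * A%:Z by rewrite /s0; nia.
  have h2 : 0 <= y + s0 * B%:Z by rewrite /s0; nia.
  apply: (H (absz (x + s0 * A%:Z + (y + s0 * B%:Z))) s0 h1 h2).
  by rewrite gez0_abs //; lia.
elim=> [|N IH] s h1 h2 hs.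
  by exists s; split => //; left; nia.
have [hc|hc] := boolP ((x + (s - 1) * A%:Z < 0) || (y + (s - 1) * B%:Z < 0)).
  by exists s; split => //; case/orP: hc; [left|right].
move: hc; rewrite negb_or -!real_leNgt ?num_real // => /andP [c1 c2].
apply: (IH (s - 1)) => //; nia.
Qed.

Lemma arith_surj (p r a : nat) (n d : int) : (0 < r)%N -> (0 < a)%N -> (0 < p)%N ->
  exists i j k : nat, [/\ (i < r)%N, ~ ((a * (p + r) <= j)%N /\ (a * p <= k)%N),
    i%:Z - (p * j)%N%:Z + ((p + r) * k)%N%:Z = n &
    exists e : int, k%:Z - j%:Z - d = (a * r)%N%:Z * e].
Proof.
move=> hr ha hp.
set N := n - (p + r)%:Z * d.
have hr0 : r%:Z != 0 by lia.
have hi0 := modz_ge0 N hr0.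
have hi1 : (N %% r%:Z)%Z < r%:Z by apply: ltz_pmod; rewrite ltz_nat.
have hdiv := divz_eq N r%:Z.
set L := (N %/ r%:Z)%Z in hdiv.
set i := (N %% r%:Z)%Z in hi0 hi1 hdiv.
have hA : (0 < a * (p + r))%N by rewrite muln_gt0 ha addn_gt0 hr orbT.
have hB : (0 < a * p)%N by rewrite muln_gt0 ha hp.
have [s [s1 s2 s3]] := @shift_exists L (L + d) _ _ hA hB.
exists (absz i), (absz (L + s * (a * (p + r))%N%:Z)), (absz (L + d + s * (a * p)%N%:Z)).
rewrite !gez0_abs //; split.
- by rewrite -ltz_nat gez0_abs.
- move=> [c1 c2]; move: c1 c2; rewrite -!lez_nat !gez0_abs // => c1 c2.
  case: s3; nia.
- rewrite !PoszM !PoszD !gez0_abs //; rewrite /N in hdiv; nia.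
- by exists (- s); rewrite !PoszM !PoszD; ring.
Qed.

Section Basics.
Variable K : numClosedFieldType.
Local Notation P := {mpoly K[5]}.
Local Notation X := (Xc K).
Definition o0 : 'I_5 := inord 0.
Definition o1 : 'I_5 := inord 1.
Definition o2 : 'I_5 := inord 2.
Definition o3 : 'I_5 := inord 3.
Definition o4 : 'I_5 := inord 4.

Lemma ord5_cases (i : 'I_5) : i = o0 \/ i = o1 \/ i = o2 \/ i = o3 \/ i = o4.
Proof.
case: i => [[|[|[|[|[|k]]]]] hk].
- by left; apply: val_inj; rewrite /= inordK.
- by right; left; apply: val_inj; rewrite /= inordK.
- by right; right; left; apply: val_inj; rewrite /= inordK.
- by right; right; right; left; apply: val_inj; rewrite /= inordK.
- by right; right; right; right; apply: val_inj; rewrite /= inordK.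
- by [].
Qed.

Lemma Xexp (nu : 'X_{1..5}) :
  'X_[nu] = X 0 ^+ nu o0 * X 1 ^+ nu o1 * X 2 ^+ nu o2 * X 3 ^+ nu o3 * X 4 ^+ nu o4 :> P.
Proof.
rewrite mpolyXE_id !big_ord_recl big_ord0 mulr1 /Xc -!mulrA.
have H : forall i j : 'I_5, i = j -> 'X_i ^+ nu i = ('X_j ^+ nu j : P) by move=> i j ->.
congr (_ * (_ * (_ * (_ * _)))); apply: H; apply: val_inj; by rewrite /= inordK.
Qed.

Lemma XcE k : X k = 'X_[U_(inord k)].
Proof. by []. Qed.

Lemma coefMX0 (c : P) (g nu : 'X_{1..5}) : ~~ (g <= nu)%MM -> (c * 'X_[g])@_nu = 0.
Proof.
move=> hg; apply: memN_msupp_eq0; apply/negP.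
rewrite (perm_mem (msuppMX c g)) => /mapP [k _ e].
by move: hg; rewrite e lem_addr.
Qed.

Lemma sum_delta (s : seq 'X_{1..5}) (F : 'X_{1..5} -> K) nu : uniq s ->
  \sum_(k <- s) F k * (k == nu)%:R = if nu \in s then F nu else 0.
Proof.
elim: s => [|x s IH] /=; first by rewrite big_nil.
case/andP=> hx hs; rewrite big_cons IH // in_cons.
case: (eqVneq x nu) => [<-|hne].
  by rewrite /= (negbTE hx) mulr1 addr0.
by rewrite /= mulr0 add0r.
Qed.

End Basics.

Section J0.
Variable K : numClosedFieldType.
Local Notation P := {mpoly K[5]}.
Local Notation X := (Xc K).
Variables p q a : nat.
Hypothesis hp : (0 < p)%N.
Hypothesis hpq : (p < q)%N.
Hypothesis ha : (0 < a)%N.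
Local Notation J0 := (@inJ0 K p q a).

Definition g0 : 'X_{1..5} := (U_(o0) *+ (q - p))%MM.
Definition g2 : 'X_{1..5} := U_(o2)%MM.
Definition g4 : 'X_{1..5} := U_(o4)%MM.
Definition g13 : 'X_{1..5} := (U_(o1) *+ (a * q) + U_(o3) *+ (a * p))%MM.
Definition Mq : P := X 1 ^+ (a * q) * X 3 ^+ (a * p).

Definition good (nu : 'X_{1..5}) : bool :=
  [&& nu o2 == 0%N, nu o4 == 0%N, (nu o0 < q - p)%N &
      ~~ ((a * q <= nu o1)%N && (a * p <= nu o3)%N)].

Lemma U_ok (i j : nat) : (i < 5)%N -> (j < 5)%N ->
  (U_(inord i : 'I_5))%MM (inord j) = (i == j).
Proof. by move=> hi hj; rewrite mnm1E -val_eqE /= !inordK. Qed.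

Lemma X0g0 : X 0 ^+ (q - p) = 'X_[g0].
Proof. by rewrite /Xc mpolyXn. Qed.
Lemma X2g2 : X 2 = 'X_[g2].
Proof. by []. Qed.
Lemma X4g4 : X 4 = 'X_[g4].
Proof. by []. Qed.
Lemma Mg13 : Mq = 'X_[g13].
Proof. by rewrite /Mq /Xc !mpolyXn mpolyXD. Qed.

Lemma J0_alt f : J0 f <-> exists c0 c1 c2 c3 : P,
  f = c0 * 'X_[g0] + c1 * 'X_[g2] + c2 * 'X_[g4] + c3 * 'X_[g13].
Proof. by rewrite /inJ0 X0g0 -Mg13. Qed.

Lemma le_gen (g nu : 'X_{1..5}) : (g <= nu)%MM -> forall i, (g i <= nu i)%N.
Proof. by move/mnm_lepP. Qed.

Lemma good_not_le nu : good nu ->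
  [&& ~~ (g0 <= nu)%MM, ~~ (g2 <= nu)%MM, ~~ (g4 <= nu)%MM & ~~ (g13 <= nu)%MM].
Proof.
case/and4P=> /eqP h2 /eqP h4 h0 h13.
apply/and4P; split; apply/negP => /le_gen H.
- by move: (H o0); rewrite mulmnE U_ok // mul1n leqNgt h0.
- by move: (H o2); rewrite U_ok // h2.
- by move: (H o4); rewrite U_ok // h4.
- move: h13 (H o1) (H o3); rewrite !mnmDE !mulmnE !U_ok //= !mul1n !mul0n addn0 add0n.
  by move=> /negP h a1 a3; apply: h; rewrite a1 a3.
Qed.

Lemma notgood_le nu : ~~ good nu ->
  [|| (g0 <= nu)%MM, (g2 <= nu)%MM, (g4 <= nu)%MM | (g13 <= nu)%MM].
Proof.
rewrite /good; case: (posnP (nu o2)) => [h2|h2] /=.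
  case: (posnP (nu o4)) => [h4|h4] /=.
    case: (ltnP (nu o0) (q - p)) => h0 /=.
      rewrite negbK => /andP [h1 h3]; rewrite orbA orbA orbC; apply/orP; left.
      apply/mnm_lepP => i; rewrite mnmDE !mulmnE.
      by case: (ord5_cases i) => [->|[->|[->|[->|->]]]]; rewrite !U_ok //= ?mul1n ?mul0n ?addn0 ?add0n.
    move=> _; apply/orP; left; apply/mnm_lepP => i; rewrite mulmnE.
    by case: (ord5_cases i) => [->|[->|[->|[->|->]]]]; rewrite !U_ok //= ?mul1n ?mul0n.
  move=> _; apply/orP; right; apply/orP; right; apply/orP; left; apply/mnm_lepP => i.
  by case: (ord5_cases i) => [->|[->|[->|[->|->]]]]; rewrite !U_ok.
move=> _; apply/orP; right; apply/orP; left; apply/mnm_lepP => i.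
by case: (ord5_cases i) => [->|[->|[->|[->|->]]]]; rewrite !U_ok.
Qed.

Lemma inJ0_coef f nu : J0 f -> good nu -> f@_nu = 0.
Proof.
case/J0_alt=> [c0 [c1 [c2 [c3 ->]]]] /good_not_le /and4P [n0 n2 n4 n13].
by rewrite !mcoeffD !coefMX0 // !addr0.
Qed.

Lemma inJ0_0 : J0 (0 : P).
Proof. by exists 0, 0, 0, 0; rewrite !mul0r !addr0. Qed.

Lemma inJ0_D f g : J0 f -> J0 g -> J0 (f + g).
Proof.
case=> [c0 [c1 [c2 [c3 ->]]]] [d0 [d1 [d2 [d3 ->]]]].
by exists (c0 + d0), (c1 + d1), (c2 + d2), (c3 + d3); ring.
Qed.

Lemma inJ0_M h f : J0 f -> J0 (h * f).
Proof.
case=> [c0 [c1 [c2 [c3 ->]]]].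
by exists (h * c0), (h * c1), (h * c2), (h * c3); ring.
Qed.

Lemma inJ0_N f : J0 f -> J0 (- f).
Proof. by move=> H; rewrite -mulN1r; apply: inJ0_M. Qed.

Lemma inJ0_B f g : J0 f -> J0 g -> J0 (f - g).
Proof. by move=> H1 H2; apply: inJ0_D => //; apply: inJ0_N. Qed.

Lemma inJ0_sum (s : seq 'X_{1..5}) (Pr : pred 'X_{1..5}) (F : 'X_{1..5} -> P) :
  (forall k, Pr k -> J0 (F k)) -> J0 (\sum_(k <- s | Pr k) F k).
Proof.
move=> H; elim/big_rec: _ => [|k x Hk Hx]; first exact: inJ0_0.
by apply: inJ0_D => //; apply: H.
Qed.

Lemma inJ0_mono nu : ~~ good nu -> J0 ('X_[nu] : P).
Proof.
move/notgood_le => /or4P [h|h|h|h]; rewrite -(submK h) mpolyXD; apply/J0_alt.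
- by exists 'X_[nu - g0], 0, 0, 0; ring.
- by exists 0, 'X_[nu - g2], 0, 0; ring.
- by exists 0, 0, 'X_[nu - g4], 0; ring.
- by exists 0, 0, 0, 'X_[nu - g13]; ring.
Qed.

Lemma reduce (f : P) : exists r : P,
  J0 (f - r) /\ forall nu, ~~ good nu -> r@_nu = 0.
Proof.
exists (\sum_(k <- msupp f | good k) f@_k *: 'X_[k]); split.
  rewrite {1}(mpolyE f) (bigID good) /= addrC addrK.
  by apply: inJ0_sum => k hk; rewrite -mul_mpolyC; apply: inJ0_M; apply: inJ0_mono.
move=> nu hnu; rewrite raddf_sum /=; apply: big1 => k hk.
rewrite mcoeffZ mcoeffX; case: eqP => [e|_]; last by rewrite mulr0.
by move: hk; rewrite e (negbTE hnu).
Qed.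

End J0.

Section GactS.
Variable K : numClosedFieldType.
Local Notation P := {mpoly K[5]}.
Local Notation X := (Xc K).
Variables p q : nat.
Variables t z : K.
Local Notation G := (@Gact K p q t z).

Lemma GactD f g : G (f + g) = G f + G g.
Proof. by rewrite /Gact rmorphD. Qed.
Lemma GactB f g : G (f - g) = G f - G g.
Proof. by rewrite /Gact rmorphB. Qed.
Lemma GactM f g : G (f * g) = G f * G g.
Proof. by rewrite /Gact rmorphM. Qed.
Lemma GactXn f k : G (f ^+ k) = G f ^+ k.
Proof. by rewrite /Gact rmorphXn. Qed.
Lemma GactZ c f : G (c *: f) = c *: G f.
Proof. by rewrite /Gact linearZ. Qed.
Lemma Gact1 : G 1 = 1.
Proof. by rewrite /Gact rmorph1. Qed.
Lemma Gact_sum (s : seq 'X_{1..5}) (F : 'X_{1..5} -> P) :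
  G (\sum_(k <- s) F k) = \sum_(k <- s) G (F k).
Proof. by rewrite /Gact raddf_sum. Qed.

Lemma GactX0 : G (X 0) = t *: X 0.
Proof. by rewrite /Gact /Xc comp_mpolyXU inordK. Qed.
Lemma GactX1 : G (X 1) = (t ^- p * z^-1) *: X 1.
Proof. by rewrite /Gact /Xc comp_mpolyXU inordK. Qed.
Lemma GactX2 : G (X 2) = (t ^- p * z^-1) *: X 2.
Proof. by rewrite /Gact /Xc comp_mpolyXU inordK. Qed.
Lemma GactX3 : G (X 3) = (t ^+ q * z) *: X 3.
Proof. by rewrite /Gact /Xc comp_mpolyXU inordK. Qed.
Lemma GactX4 : G (X 4) = (t ^+ q * z) *: X 4.
Proof. by rewrite /Gact /Xc comp_mpolyXU inordK. Qed.

Definition chi (nu : 'X_{1..5}) : K :=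
  t ^+ (nu o0) * (t ^- p * z^-1) ^+ (nu o1 + nu o2) * (t ^+ q * z) ^+ (nu o3 + nu o4).

Lemma GactXm nu : G 'X_[nu] = chi nu *: 'X_[nu].
Proof.
rewrite Xexp !GactM !GactXn GactX0 GactX1 GactX2 GactX3 GactX4 !exprZn.
rewrite -!mul_mpolyC /chi !exprD !rmorphM /=; ring.
Qed.

Lemma GactE f nu : (G f)@_nu = chi nu * f@_nu.
Proof.
rewrite {1}(mpolyE f) Gact_sum raddf_sum /=.
under eq_bigr => k _ do rewrite GactZ GactXm scalerA mcoeffZ mcoeffX.
rewrite sum_delta ?msupp_uniq //; case: ifP => [_|hn]; first by rewrite mulrC.
by rewrite (memN_msupp_eq0 (negbT hn)) mulr0.
Qed.

End GactS.

Section Chars.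
Variable K : numClosedFieldType.
Variables p q a : nat.
Hypothesis hp : (0 < p)%N.
Hypothesis hpq : (p < q)%N.
Hypothesis ha : (0 < a)%N.
Local Notation m := (a * (q - p))%N.

Definition wt (nu : 'X_{1..5}) : int :=
  (nu o0)%:Z - (p * (nu o1 + nu o2))%N%:Z + (q * (nu o3 + nu o4))%N%:Z.
Definition vt (nu : 'X_{1..5}) : int := (nu o3 + nu o4)%N%:Z - (nu o1 + nu o2)%N%:Z.
Definition mdvd (x : int) := exists e : int, x = (m%:Z * e)%R.

Lemma chi_eq (t z : K) nu : t != 0 -> z != 0 ->
  chi p q t z nu = t ^ wt nu * z ^ vt nu.
Proof.
move=> ht hz; rewrite /chi /wt /vt !expfzDr // -!exprnN -!exprnP.
rewrite !exprMn !exprVn -!exprM [(q * _)%N]mulnC [(p * _)%N]mulnC.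
by field; rewrite ?expf_neq0.
Qed.

Lemma one_powz (k : int) : (1 : K) ^ k = 1.
Proof. by case: k => n; rewrite /exprz ?expr1n ?invr1. Qed.

Lemma pow_eq1 (x : K) (k : int) : x ^ k = 1 -> x ^+ `|k|%N = 1.
Proof.
case: k => n /=; first by rewrite -exprnP.
by rewrite NegzE -exprnN => /eqP; rewrite invr_eq1 => /eqP.
Qed.

Lemma powz_eq (x : K) (k l : int) : x != 0 -> x ^ k = x ^ l -> x ^+ `|k - l|%N = 1.
Proof.
move=> hx e; apply: pow_eq1.
have hl : x ^ l != 0 by rewrite expfz_eq0 negb_and hx orbT.
apply: (mulIf hl); rewrite mul1r -expfzDr // -e; congr (_ ^ _); ring.
Qed.

Lemma two_pow_neq1 n : (0 < n)%N -> (2%:R : K) ^+ n != 1.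
Proof.
move=> hn; rewrite -natrX pnatr_eq1; apply/eqP => h.
by move: (ltn_exp2l 0 n (isT : (1 < 2)%N)); rewrite hn expn0 h ltnn.
Qed.

Lemma sep (w1 v1 w2 v2 : int) : w1 <> w2 \/ ~ mdvd (v1 - v2) ->
  exists t z : K, [/\ t != 0, z ^+ m = 1 & t ^ w1 * z ^ v1 != t ^ w2 * z ^ v2].
Proof.
case=> [hw|hv].
  exists 2%:R, 1; split; first by rewrite pnatr_eq0.
    by rewrite expr1n.
  rewrite !one_powz !mulr1; apply/negP => /eqP /powz_eq.
  rewrite pnatr_eq0 => /(_ isT) /eqP; apply/negP; apply: two_pow_neq1.
  by rewrite absz_gt0 subr_eq0; apply/eqP.
have hm : (0 < m)%N by rewrite muln_gt0 ha subn_gt0.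
have [z hz] := prim_root_exists K hm.
exists 1, z; split; first by rewrite oner_eq0.
  exact: prim_expr_order.
have hz0 : z != 0.
  by apply/negP => /eqP e; move: (prim_expr_order hz); rewrite e expr0n eqn0Ngt hm /= => /eqP; rewrite eq_sym oner_eq0.
rewrite !one_powz !mul1r; apply/negP => /eqP /(powz_eq hz0).
move/eqP; rewrite -(prim_order_dvd hz) => /dvdnP [e he]; apply: hv.
case: (ger0P (v1 - v2)) => hs.
  have h1 : ((`|v1 - v2|%N : nat) : int) = v1 - v2 by rewrite gez0_abs.
  by exists e%:Z; rewrite -h1 he; nia.
have h1 : ((`|v1 - v2|%N : nat) : int) = - (v1 - v2) by rewrite ltz0_abs.
by exists (- e%:Z); move: h1; rewrite he; nia.
Qed.

Lemma good_inj nu1 nu2 : good p q a nu1 -> good p q a nu2 -> wt nu1 = wt nu2 ->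
  mdvd (vt nu1 - vt nu2) -> nu1 = nu2.
Proof.
rewrite /good /wt /vt /mdvd.
case/and4P => /eqP a2 /eqP a4 a0 a13; case/and4P => /eqP b2 /eqP b4 b0 b13.
move=> hw [e he].
rewrite a2 a4 b2 b4 !addn0 in hw he.
set r := (q - p)%N in a0 b0 he.
have hq : q = (p + r)%N by rewrite /r subnKC // ltnW.
rewrite hq in a13 b13 hw.
have hr : (0 < r)%N by rewrite /r subn_gt0.
have [e0 e1 e3] := arith_inj hr ha a0 b0 (elimN andP a13) (elimN andP b13) hw he.
apply/mnmP => i; case: (ord5_cases i) => [->|[->|[->|[->|->]]]] //.
- by rewrite a2 b2.
- by rewrite a4 b4.
Qed.

Definition mk5 (i j k : nat) : 'X_{1..5} := [multinom (nth 0%N [:: i; j; 0%N; k; 0%N] l) | l < 5].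

Lemma mk5E i j k : [/\ mk5 i j k o0 = i, mk5 i j k o1 = j, mk5 i j k o2 = 0%N,
  mk5 i j k o3 = k & mk5 i j k o4 = 0%N].
Proof. by rewrite /mk5 !mnmE /o0 /o1 /o2 /o3 /o4 !inordK. Qed.

Lemma good_surj (n d : int) : exists nu, [/\ good p q a nu, wt nu = n & mdvd (vt nu - d)].
Proof.
set r := (q - p)%N.
have hq : q = (p + r)%N by rewrite /r subnKC // ltnW.
have hr : (0 < r)%N by rewrite /r subn_gt0.
have [i [j [k [hi hjk hw [e he]]]]] := arith_surj n d hr ha hp.
exists (mk5 i j k); have [e0 e1 e2 e3 e4] := mk5E i j k.
rewrite /good /wt /vt /mdvd e0 e1 e2 e3 e4 !addn0 -/r hq; split.
- rewrite eqxx /= hi /=; apply/negP => /andP [c1 c2]; exact: hjk.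
- exact: hw.
- by exists e.
Qed.

End Chars.

Section Core.
Variable K : numClosedFieldType.
Local Notation P := {mpoly K[5]}.
Local Notation X := (Xc K).
Variables p q a : nat.
Hypothesis hp : (0 < p)%N.
Hypothesis hpq : (p < q)%N.
Hypothesis ha : (0 < a)%N.
Local Notation m := (a * (q - p))%N.
Local Notation J0 := (@inJ0 K p q a).
Local Notation good := (good p q a).

Lemma J0_G t z f : J0 f -> J0 (Gact p q t z f).
Proof.
case/J0_alt => [c0 [c1 [c2 [c3 ->]]]].
rewrite !GactD !GactM !GactXm -!mul_mpolyC.
by apply/J0_alt; eexists _, _, _, _; rewrite !mulrA.
Qed.

Lemma J0_ideal : is_ideal J0.
Proof. split; [exact: inJ0_0 | exact: inJ0_D | exact: inJ0_M]. Qed.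

Lemma J0_Gst : G_stable p q m J0.
Proof. by move=> t z _ _ f; apply: J0_G. Qed.

Lemma z_neq0 (z : K) : z ^+ m = 1 -> z != 0.
Proof.
have hm : (0 < m)%N by rewrite muln_gt0 ha subn_gt0.
move=> hz; apply/negP => /eqP e; move: hz; rewrite e expr0n (gtn_eqF hm).
by move=> /eqP; rewrite eq_sym oner_eq0.
Qed.

Variable J : P -> Prop.
Hypothesis hJ : is_ideal J.
Hypothesis hJ0 : forall f, J0 f -> J f.
Hypothesis hG : G_stable p q m J.

Lemma J_0 : J 0. Proof. by case: hJ. Qed.
Lemma J_D f g : J f -> J g -> J (f + g). Proof. by case: hJ => _ H _; apply: H. Qed.
Lemma J_M h f : J f -> J (h * f). Proof. by case: hJ => _ _ H; apply: H. Qed.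
Lemma J_Z c f : J f -> J (c *: f). Proof. by rewrite -mul_mpolyC; apply: J_M. Qed.
Lemma J_B f g : J f -> J g -> J (f - g).
Proof. by move=> H1 H2; apply: J_D => //; rewrite -scaleN1r; apply: J_Z. Qed.
Lemma J_sum (s : seq 'X_{1..5}) (Pr : pred 'X_{1..5}) (F : 'X_{1..5} -> P) :
  (forall k, Pr k -> J (F k)) -> J (\sum_(k <- s | Pr k) F k).
Proof.
move=> H; elim/big_rec: _ => [|k x Hk Hx]; first exact: J_0.
by apply: J_D => //; apply: H.
Qed.

Lemma size_lt (s1 s2 : seq 'X_{1..5}) x : uniq s1 -> {subset s1 <= s2} ->
  x \in s2 -> x \notin s1 -> (size s1 < size s2)%N.
Proof.
move=> u1 sub x2 x1; have := @uniq_leq_size _ (x :: s1) s2.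
rewrite /= x1 u1 => H; apply: H => // y; rewrite in_cons => /orP [/eqP ->|] //.
exact: sub.
Qed.

Lemma isolation (s : P) nu : (forall k, ~~ good k -> s@_k = 0) -> J s ->
  s@_nu != 0 -> J 'X_[nu].
Proof.
have [N eN] : exists N, (size (msupp s) <= N)%N by exists (size (msupp s)).
elim: N s nu eN => [|N IH] s nu eN hgood hJs hnu.
  by move: hnu; rewrite mcoeff_eq0; move: eN; rewrite leqn0 => /nilP ->.
case: (boolP (has (fun k => k != nu) (msupp s))) => [/hasP [nu1 hin hne]|hall].
  have gnu : good nu by apply/negP => /negP /hgood; apply/eqP.
  have gnu1 : good nu1.
    by apply/negP => /negP /hgood /eqP; rewrite mcoeff_eq0 hin.
  have hkey : wt p q nu <> wt p q nu1 \/ ~ mdvd p q a (vt nu - vt nu1).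
    case: (eqVneq (wt p q nu) (wt p q nu1)) => [e|e]; last by left; apply/eqP.
    right => hd; have E : nu = nu1 := good_inj hpq ha gnu gnu1 e hd.
    by rewrite E eqxx in hne.
  have [t [z [ht hz hne2]]] := sep K hp hpq ha hkey.
  have hz0 : z != 0 by apply: z_neq0 hz.
  pose s' := Gact p q t z s - chi p q t z nu1 *: s.
  have cs' k : s'@_k = (chi p q t z k - chi p q t z nu1) * s@_k.
    by rewrite /s' mcoeffB GactE mcoeffZ mulrBl.
  apply: (IH s') => //.
  - rewrite -ltnS; apply: (leq_trans _ eN); apply: (size_lt (x := nu1)) => //.
    + by move=> k; rewrite !mcoeff_msupp cs' mulf_eq0 negb_or => /andP [].
    + by rewrite mcoeff_msupp cs' subrr mul0r eqxx.
  - by move=> k /hgood hk; rewrite cs' hk mulr0.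
  - by apply: J_B; [apply: hG | apply: J_Z].
  - rewrite cs' mulf_neq0 // subr_eq0 !chi_eq //.
have es : s = s@_nu *: 'X_[nu].
  apply/mpolyP => k; rewrite mcoeffZ mcoeffX.
  case: (eqVneq nu k) => [<-|hk]; first by rewrite mulr1.
  rewrite mulr0; apply/eqP; rewrite mcoeff_eq0; apply/negP => hin.
  by move/hasPn: hall => /(_ k hin); rewrite eq_sym hk.
have -> : 'X_[nu] = (s@_nu)^-1 *: s by rewrite {2}es scalerA mulVf // scale1r.
exact: J_Z.
Qed.

Lemma iso_reduce mu (n d : int) : good mu -> wt p q mu = n -> mdvd p q a (vt mu - d) ->
  forall g, in_isotypic p q m n d J g -> exists c, J (g - c *: 'X_[mu]).
Proof.
move=> gmu hw [e1 he1] g hiso.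
have [r [hr1 hr2]] := reduce p q a g.
exists r@_mu.
have key : forall nu, nu != mu -> r@_nu != 0 -> J 'X_[nu].
  move=> nu hne hnz.
  have gnu : good nu by apply/negP => /negP /hr2; apply/eqP.
  have hkey : wt p q nu <> n \/ ~ mdvd p q a (vt nu - d).
    case: (eqVneq (wt p q nu) n) => [e|e]; last by left; apply/eqP.
    right => [[e2 he2]].
    have hd : mdvd p q a (vt nu - vt mu).
      by exists (e2 - e1); rewrite mulrBr -he1 -he2; ring.
    have E : nu = mu by apply: (good_inj hpq ha gnu gmu _ hd); rewrite e hw.
    by rewrite E eqxx in hne.
  have [t [z [ht hz hne2]]] := sep K hp hpq ha hkey.
  have hz0 : z != 0 by apply: z_neq0 hz.
  pose s := Gact p q t z r - (t ^ n * z ^ d) *: r.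
  have cs k : s@_k = (chi p q t z k - t ^ n * z ^ d) * r@_k.
    by rewrite /s mcoeffB GactE mcoeffZ mulrBl.
  apply: (isolation (s := s)).
  - by move=> k /hr2 hk; rewrite cs hk mulr0.
  - have -> : s = (Gact p q t z g - (t ^ n * z ^ d) *: g)
       - (Gact p q t z (g - r) - (t ^ n * z ^ d) *: (g - r)).
      by rewrite /s GactB -!mul_mpolyC; ring.
    apply: J_B; first exact: hiso.
    apply: J_B; first by apply: hJ0; apply: J0_G.
    by apply: J_Z; apply: hJ0.
  - by rewrite cs mulf_neq0 // subr_eq0 chi_eq // hw.
have split : r = r@_mu *: 'X_[mu] + \sum_(k <- msupp r | k != mu) r@_k *: 'X_[k].
  rewrite {1}(mpolyE r); case: (boolP (mu \in msupp r)) => hin.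
    by rewrite (bigD1_seq mu hin (msupp_uniq r)).
  rewrite (memN_msupp_eq0 hin) scale0r add0r.
  rewrite [LHS](bigID (fun k => k != mu)) /= [X in _ + X]big1_seq ?addr0 //.
  by move=> k /andP [/negPn /eqP -> hk]; rewrite hk in hin.
have -> : g - r@_mu *: 'X_[mu] = (g - r) + \sum_(k <- msupp r | k != mu) r@_k *: 'X_[k].
  rewrite {2}split; set A := r@_mu *: _; set B := \sum_(k <- _ | _) _; ring.
apply: J_D; first exact: hJ0.
apply: J_sum => k hk; case: (eqVneq r@_k 0) => [->|hnz]; first by rewrite scale0r; exact: J_0.
by apply: J_Z; apply: key.
Qed.

Hypothesis hdim : forall n d : int, isotypic_dim1 p q m n d J.

Lemma mono_notin nu : good nu -> ~ J 'X_[nu].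
Proof.
move=> gnu hX.
have [f [fiso fnot _]] := hdim (wt p q nu) (vt nu).
have h0 : mdvd p q a (vt nu - vt nu) by exists 0; rewrite subrr mulr0.
have [c hc] := iso_reduce gnu erefl h0 fiso.
apply: fnot; rewrite -(subrK (c *: 'X_[nu]) f).
by apply: J_D => //; apply: J_Z.
Qed.

Lemma J_sub_J0 g : J g -> J0 g.
Proof.
move=> hg; have [r [hr1 hr2]] := reduce p q a g.
have Jr : J r by rewrite -(subKr g r); apply: J_B => //; apply: hJ0.
have r0 : r = 0.
  apply/mpolyP => k; rewrite mcoeff0; case: (boolP (good k)) => gk; last exact: hr2.
  case: (eqVneq r@_k 0) => // hnz; exfalso; apply: (mono_notin gk).
  exact: (@isolation r k hr2 Jr hnz).
by move: hr1; rewrite r0 subr0.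
Qed.

End Core.

Section BactS.
Variable K : numClosedFieldType.
Local Notation P := {mpoly K[5]}.
Local Notation X := (Xc K).
Variables b11 b12 b22 : K.
Local Notation B := (@Bact K b11 b12 b22).

Lemma BactD f g : B (f + g) = B f + B g.
Proof. by rewrite /Bact rmorphD. Qed.
Lemma BactB f g : B (f - g) = B f - B g.
Proof. by rewrite /Bact rmorphB. Qed.
Lemma BactM f g : B (f * g) = B f * B g.
Proof. by rewrite /Bact rmorphM. Qed.
Lemma BactXn f k : B (f ^+ k) = B f ^+ k.
Proof. by rewrite /Bact rmorphXn. Qed.
Lemma BactZ c f : B (c *: f) = c *: B f.
Proof. by rewrite /Bact linearZ. Qed.
Lemma Bact1 : B 1 = 1.
Proof. by rewrite /Bact rmorph1. Qed.
Lemma BactX0 : B (X 0) = X 0.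
Proof. by rewrite /Bact /Xc comp_mpolyXU inordK. Qed.
Lemma BactX1 : B (X 1) = b11 *: X 1 + b12 *: X 2.
Proof. by rewrite /Bact /Xc comp_mpolyXU inordK. Qed.
Lemma BactX2 : B (X 2) = b22 *: X 2.
Proof. by rewrite /Bact /Xc comp_mpolyXU inordK. Qed.
Lemma BactX3 : B (X 3) = b11 *: X 3 + b12 *: X 4.
Proof. by rewrite /Bact /Xc comp_mpolyXU inordK. Qed.
Lemma BactX4 : B (X 4) = b22 *: X 4.
Proof. by rewrite /Bact /Xc comp_mpolyXU inordK. Qed.
End BactS.

Lemma binom_split (K : numClosedFieldType) (x w y : {mpoly K[5]}) n :
  exists h, (x + w * y) ^+ n = x ^+ n + w * h.
Proof.
elim: n => [|n [h IH]]; first by exists 0; rewrite !expr0 mulr0 addr0.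
by exists (x * h + y * x ^+ n + y * w * h); rewrite !exprS IH; ring.
Qed.

Section Rev.
Variable K : numClosedFieldType.
Local Notation P := {mpoly K[5]}.
Local Notation X := (Xc K).
Variables p q a : nat.
Hypothesis hp : (0 < p)%N.
Hypothesis hpq : (p < q)%N.
Hypothesis ha : (0 < a)%N.
Local Notation m := (a * (q - p))%N.
Local Notation J0 := (@inJ0 K p q a).
Local Notation good := (good p q a).

Lemma J0_Bst : B_stable J0.
Proof.
move=> b11 b12 b22 _ f [c0 [c1 [c2 [c3 ->]]]].
rewrite !BactD !BactM !BactXn BactX0 BactX1 BactX2 BactX3 BactX4.
rewrite -[b12 *: X 2]mul_mpolyC -[b12 *: X 4]mul_mpolyC [_%:MP * X 2]mulrC [_%:MP * X 4]mulrC.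
have [h1 e1] := binom_split (b11 *: X 1) (X 2) b12%:MP (a * q).
have [h3 e3] := binom_split (b11 *: X 3) (X 4) b12%:MP (a * p).
rewrite e1 e3 !exprZn -!mul_mpolyC.
exists (Bact b11 b12 b22 c0),
  (Bact b11 b12 b22 c1 * b22%:MP + Bact b11 b12 b22 c3 * h1 * ((b11 ^+ (a * p))%:MP * X 3 ^+ (a * p) + X 4 * h3)),
  (Bact b11 b12 b22 c2 * b22%:MP + Bact b11 b12 b22 c3 * ((b11 ^+ (a * q))%:MP * X 1 ^+ (a * q)) * h3),
  (Bact b11 b12 b22 c3 * (b11 ^+ (a * q))%:MP * (b11 ^+ (a * p))%:MP).
ring.
Qed.

Lemma Heq_J0 : J0 (Heq K p q).
Proof. by exists 1, (X 3), (- X 1), 0; rewrite /Heq; ring. Qed.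

Lemma J0_dim1 (n d : int) : isotypic_dim1 p q m n d J0.
Proof.
have [mu [gmu hw hv]] := good_surj hp hpq ha n d.
exists 'X_[mu]; split.
- move=> t z ht hz; have hz0 : z != 0 by apply: (z_neq0 hpq ha) hz.
  rewrite GactXm -scalerBl chi_eq // hw.
  case: hv => e he.
  have -> : vt mu = d + m%:Z * e by rewrite -he; ring.
  rewrite expfzDr // -exprz_exp -exprnP hz one_powz mulr1 subrr scale0r.
  exact: inJ0_0.
- move/inJ0_coef => /(_ mu gmu); rewrite mcoeffX eqxx => /eqP; by rewrite oner_eq0.
- move=> g hg; apply: (iso_reduce (J := J0) hp hpq ha _ _ _ gmu hw hv hg) => //.
  + exact: J0_ideal.
  + exact: J0_Gst.
Qed.

End Rev.

Section Fwd.
Variable K : numClosedFieldType.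
Local Notation P := {mpoly K[5]}.
Local Notation X := (Xc K).
Variables p q a : nat.
Hypothesis hp : (0 < p)%N.
Hypothesis hpq : (p < q)%N.
Hypothesis ha : (0 < a)%N.
Local Notation m := (a * (q - p))%N.
Local Notation J0 := (@inJ0 K p q a).
Variable J : P -> Prop.
Hypothesis hJ : is_ideal J.
Hypothesis hB : B_stable J.
Hypothesis hdim : forall n d : int, isotypic_dim1 p q m n d J.

Let J_0 : J 0. Proof. by case: hJ. Qed.
Let J_D f g : J f -> J g -> J (f + g). Proof. by case: hJ => _ H _; apply: H. Qed.
Let J_M h f : J f -> J (h * f). Proof. by case: hJ => _ _ H; apply: H. Qed.
Let J_Z c f : J f -> J (c *: f). Proof. by rewrite -mul_mpolyC; apply: J_M. Qed.
Let J_B f g : J f -> J g -> J (f - g).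
Proof. by move=> H1 H2; apply: J_D => //; rewrite -scaleN1r; apply: J_Z. Qed.
Let J_inv c f : c != 0 -> J (c *: f) -> J f.
Proof. by move=> hc H; rewrite -[f]scale1r -(mulVf hc) -scalerA; apply: J_Z. Qed.

Lemma pairstep (n d : int) (A B : P) :
  in_isotypic p q m n d J A -> in_isotypic p q m n d J B ->
  Bact 1 1 1 A = A + B -> Bact 1 1 1 B = B -> J B.
Proof.
move=> iA iB bA bB.
have [f [_ fnot fall]] := hdim n d.
have [c1 h1] := fall A iA; have [c2 h2] := fall B iB.
have hB1 : forall g, J g -> J (Bact 1 1 1 g) by move=> g; apply: hB; rewrite mulr1.
case: (eqVneq c1 0) => [c10|c1n0].
  move: h1; rewrite c10 scale0r subr0 => JA.
  have := hB1 _ JA; rewrite bA => JAB.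
  by have := J_B JAB JA; rewrite addrAC subrr add0r.
have Ju : J (c2 *: A - c1 *: B).
  have -> : c2 *: A - c1 *: B = c2 *: (A - c1 *: f) - c1 *: (B - c2 *: f).
    by rewrite !scalerBr !scalerA mulrC; rewrite -!mul_mpolyC; ring.
  by apply: J_B; apply: J_Z.
have := J_B (hB1 _ Ju) Ju; rewrite BactB !BactZ bA bB.
have -> : c2 *: (A + B) - c1 *: B - (c2 *: A - c1 *: B) = c2 *: B.
  by rewrite -!mul_mpolyC; ring.
case: (eqVneq c2 0) => [c20|c2n0]; last by apply: J_inv.
move=> _; move: Ju; rewrite c20 scale0r sub0r -scaleNr; apply: J_inv.
by rewrite oppr_eq0.
Qed.

Lemma Bu1 : Bact 1 1 1 (X 1) = X 1 + X 2.
Proof. by rewrite BactX1 !scale1r. Qed.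
Lemma Bu2 : Bact 1 1 1 (X 2) = X 2.
Proof. by rewrite BactX2 !scale1r. Qed.
Lemma Bu3 : Bact 1 1 1 (X 3) = X 3 + X 4.
Proof. by rewrite BactX3 !scale1r. Qed.
Lemma Bu4 : Bact 1 1 1 (X 4) = X 4.
Proof. by rewrite BactX4 !scale1r. Qed.

Lemma iso12 k : (k = 1 \/ k = 2)%N -> in_isotypic p q m (- (p%:Z)) (-1) J (X k).
Proof.
move=> hk t z ht hz.
have -> : Gact p q t z (X k) = (t ^- p * z^-1) *: X k.
  by case: hk => ->; [exact: GactX1 | exact: GactX2].
by rewrite -exprnN exprN1 subrr.
Qed.

Lemma iso34 k : (k = 3 \/ k = 4)%N -> in_isotypic p q m (q%:Z) 1 J (X k).
Proof.
move=> hk t z ht hz.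
have -> : Gact p q t z (X k) = (t ^+ q * z) *: X k.
  by case: hk => ->; [exact: GactX3 | exact: GactX4].
by rewrite -exprnP -(exprnP z 1) expr1 subrr.
Qed.

Lemma J_X2 : J (X 2).
Proof. apply: (pairstep (iso12 _) (iso12 _) Bu1 Bu2); by [left | right]. Qed.
Lemma J_X4 : J (X 4).
Proof. apply: (pairstep (iso34 _) (iso34 _) Bu3 Bu4); by [left | right]. Qed.

Lemma iso1 : in_isotypic p q m 0 0 J 1.
Proof.
move=> t z ht hz; rewrite Gact1 -!(exprnP _ 0) !expr0 mulr1 scale1r subrr.
exact: J_0.
Qed.

Lemma isoM : in_isotypic p q m 0 0 J (Mq K p q a).
Proof.
move=> t z ht hz; have hz0 : z != 0 by apply: (z_neq0 hpq ha) hz.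
rewrite /Mq GactM !GactXn GactX1 GactX3 !exprZn -scalerAl -scalerAr scalerA.
have -> : (t ^- p * z^-1) ^+ (a * q) * (t ^+ q * z) ^+ (a * p) = 1.
  have e1 : (a * q = a * p + m)%N by rewrite -mulnDr subnKC // ltnW.
  have ez : z ^+ (a * q) = z ^+ (a * p) by rewrite e1 exprD hz mulr1.
  have et : (p * (a * q) = q * (a * p))%N by nia.
  rewrite !exprMn !exprVn ez -!exprM et.
  by field; rewrite ?expf_neq0.
by rewrite -!(exprnP _ 0) !expr0 mulr1 subrr; exact: J_0.
Qed.

Lemma J_Mq : J (Mq K p q a).
Proof.
have [f [_ fnot fall]] := hdim 0 0.
have [c1 h1] := fall 1 iso1; have [c2 h2] := fall _ isoM.
have J1 : ~ J 1 by move=> H; apply: fnot; rewrite -[f]mulr1; apply: J_M.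
have c1n0 : c1 != 0 by apply/eqP => c0; apply: J1; move: h1; rewrite c0 scale0r subr0.
have [e hec] : exists e, e * c1 = c2 by exists (c2 / c1); rewrite divfK.
have Jv : J (Mq K p q a - e *: 1).
  have -> : Mq K p q a - e *: 1 = (Mq K p q a - c2 *: f) - e *: (1 - c1 *: f).
    by rewrite -!mul_mpolyC -hec rmorphM /=; ring.
  by apply: J_B => //; apply: J_Z.
have h2n0 : (2%:R : K) != 0 by rewrite pnatr_eq0.
have hb : (2%:R : K) * 2%:R^-1 = 1 by rewrite mulfV.
have := hB 0 hb Jv.
rewrite BactB BactZ Bact1 /Mq BactM !BactXn BactX1 BactX3 !scale0r !addr0 !exprZn.
rewrite -scalerAl -scalerAr scalerA => Jv2.
set l := (2%:R : K) ^+ (a * q) * 2%:R ^+ (a * p) in Jv2 *.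
have hl : l != 1 by rewrite /l -exprD; apply: two_pow_neq1; nia.
clearbody l.
rewrite /Mq in Jv.
have := J_B (J_Z l Jv) Jv2.
have -> : l *: (X 1 ^+ (a * q) * X 3 ^+ (a * p) - e *: 1) -
   (l *: (X 1 ^+ (a * q) * X 3 ^+ (a * p)) - e *: 1) = ((1 - l) * e) *: 1.
  by rewrite -!mul_mpolyC !rmorphM rmorphB rmorph1 /=; ring.
case: (eqVneq e 0) => [e0|en0].
  by move=> _; move: Jv; rewrite e0 scale0r subr0.
move=> H; exfalso; apply: J1; apply: (J_inv _ H).
by rewrite mulf_neq0 // subr_eq0 eq_sym.
Qed.

Lemma J0_sub_J f : J (Heq K p q) -> J0 f -> J f.
Proof.
move=> hH [c0 [c1 [c2 [c3 ->]]]].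
have hX0 : J (X 0 ^+ (q - p)).
  have -> : X 0 ^+ (q - p) = Heq K p q + X 1 * X 4 - X 3 * X 2 by rewrite /Heq; ring.
  by apply: J_B; [apply: J_D => //; apply: J_M; apply: J_X4 | apply: J_M; apply: J_X2].
apply: J_D; [apply: J_D; [apply: J_D|]|]; apply: J_M => //.
- exact: J_X2.
- exact: J_X4.
- exact: J_Mq.
Qed.

End Fwd.


Theorem proposition5p1 (R : realType) (p q m a : nat) :
  (0 < p)%N -> (p <= q)%N -> coprime p q -> (0 < m)%N ->
  m = (a * (q - p))%N ->
  forall J : {mpoly R[i][5]} -> Prop,
    (in_Hilb p q m J /\ B_stable J) <-> (forall f, J f <-> inJ0 p q a f).
Proof.
move=> hp hpq' _ hm0 hm J; subst m.
have ha : (0 < a)%N by move: hm0; rewrite muln_gt0 => /andP [].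
have hpq : (p < q)%N.
  rewrite ltn_neqAle hpq' andbT; apply/eqP => e; move: hm0.
  by rewrite e subnn muln0.
split.
- case=> [[hJ hH hG hdim] hB] f.
  have hJ0 : forall g, inJ0 p q a g -> J g.
    by move=> g; apply: (J0_sub_J hp hpq ha hJ hB hdim hH).
  split; last exact: hJ0.
  exact: (J_sub_J0 hp hpq ha hJ hJ0 hG hdim).
- move=> hJ.
  have eJ : J = @inJ0 _ p q a.
    apply: functional_extensionality => f; apply: propositional_extensionality.
    exact: hJ.
  rewrite eJ; split; last exact: J0_Bst.
  split.
  + exact: J0_ideal.
  + exact: Heq_J0.
  + exact: J0_Gst.
  + by move=> n d; apply: J0_dim1.
Qed.
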